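(* Let $(L,\vee,\wedge,\odot,\rightarrow,0,1)$ be a residuated lattice. The following are equivalent: (i) $L$ is a BL-algebra; (ii) for all $x,y,z\in L$, if $x\odot(x\rightarrow y)\leq z$, then $(x\rightarrow z)\vee(y\rightarrow z)=1$; (iii) $[x\odot(x\rightarrow y)]\rightarrow z=(x\rightarrow z)\vee(y\rightarrow z)$ for all $x,y,z\in L$.
   Context: A (commutative) residuated lattice is an algebra $(L,\wedge,\vee,\odot,\rightarrow,0,1)$ such that $(L,\wedge,\vee,0,1)$ is a bounded lattice, $(L,\odot,1)$ is a commutative ordered monoid, and $z\leq x\rightarrow y$ iff $x\odot z\leq y$ for all $x,y,z\in L$. A BL-algebra is a residuated lattice satisfying prelinearity $(x\rightarrow y)\vee(y\rightarrow x)=1$ and divisibility $x\odot(x\rightarrow y)=x\wedge y$ for all $x,y$. *)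

(* Defs.v *)
From mathcomp Require Import all_boot all_order.
Set Implicit Arguments. Unset Strict Implicit. Unset Printing Implicit Defensive.
Import Order.TTheory.
Local Open Scope order_scope.

Definition is_residuated_lattice (d : Order.disp_t) (L : tbLatticeType d)
  (mul imp : L -> L -> L) : Prop :=
  [/\ associative mul, commutative mul, left_id (\top : L) mul,
      (forall x y z : L, x <= y -> mul x z <= mul y z)
    & (forall x y z : L, z <= imp x y <-> mul x z <= y)].

Definition is_BL_algebra (d : Order.disp_t) (L : tbLatticeType d)
  (mul imp : L -> L -> L) : Prop :=
  [/\ is_residuated_lattice mul imp,
      (forall x y : L, imp x y `|` imp y x = \top)
    & (forall x y : L, mul x (imp x y) = x `&` y)].

(* Main.v *)
Require Import Defs.
From mathcomp Require Import all_boot all_order.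
Import Order.TTheory.
Local Open Scope order_scope.

Theorem proposition3p4 (d : Order.disp_t) (L : tbLatticeType d)
  (mul imp : L -> L -> L) :
  is_residuated_lattice mul imp ->
  (is_BL_algebra mul imp <->
     (forall x y z : L, mul x (imp x y) <= z -> imp x z `|` imp y z = \top))
  /\
  ((forall x y z : L, mul x (imp x y) <= z -> imp x z `|` imp y z = \top) <->
     (forall x y z : L, imp (mul x (imp x y)) z = imp x z `|` imp y z)).
Proof.
move=> HR; case: (HR) => mA mC m1 mono res.
have monor : forall x y z : L, x <= y -> mul z x <= mul z y.
  by move=> x y z h; rewrite (mC z x) (mC z y); apply: mono.
have mulx1 : forall x : L, mul x \top = x by move=> x; rewrite mC m1.
have MP : forall x y : L, mul x (imp x y) <= y by move=> x y; apply/res.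
have mle : forall x y : L, mul x y <= x.
  by move=> x y; rewrite -{2}(mulx1 x); apply: monor; rewrite lex1.
have imp1 : forall x y : L, \top <= imp x y <-> x <= y.
  by move=> x y; split => [/res|h]; [rewrite mulx1|apply/res; rewrite mulx1].
have antiI : forall a b z : L, a <= b -> imp b z <= imp a z.
  move=> a b z h; apply/res; apply: le_trans (MP b z); exact: mono.
have monoI : forall x y z : L, y <= z -> imp x y <= imp x z.
  move=> x y z h; apply/res; exact: le_trans (MP x y) h.
have top_eq : forall u : L, \top <= u -> u = \top.
  by move=> u h; apply/eqP; rewrite eq_le lex1 h.
have mulU : forall a b c : L, mul a (b `|` c) <= mul a b `|` mul a c.
  move=> a b c; apply/res; rewrite leUx; apply/andP; split; apply/res.
    exact: leUl.
  exact: leUr.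
have i_ii : is_BL_algebra mul imp ->
   (forall x y z : L, mul x (imp x y) <= z -> imp x z `|` imp y z = \top).
  case=> _ prel div x y z h; apply: top_eq; rewrite -(prel x y).
  rewrite leUx; apply/andP; split.
    apply: le_trans (leUl _ _); apply/res; exact: h.
  apply: le_trans (leUr _ _); apply/res; rewrite div meetC -div; exact: h.
have ii_i : (forall x y z : L, mul x (imp x y) <= z -> imp x z `|` imp y z = \top)
   -> is_BL_algebra mul imp.
  move=> H; split => //.
    move=> x y; apply: top_eq.
    have -> : \top = imp x (x `&` y) `|` imp y (x `&` y).
      by rewrite H // lexI MP mle.
    rewrite leUx; apply/andP; split.
      by apply: le_trans (leUl _ _); apply: monoI; exact: leIr.
    by apply: le_trans (leUr _ _); apply: monoI; exact: leIl.
  move=> x y; apply/eqP; rewrite eq_le lexI mle MP /=.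
  set z := mul x (imp x y).
  have HH := H x y z (lexx _).
  apply/imp1; rewrite -HH leUx; apply/andP; split; apply/res.
    apply: le_trans (MP x z); apply: mono; exact: leIl.
  apply: le_trans (MP y z); apply: mono; exact: leIr.
split; first by split.
split.
  move=> H x y z; have [_ prel div] := ii_i H; rewrite div.
  apply/eqP; rewrite eq_le; apply/andP; split.
    set t := imp (x `&` y) z.
    rewrite -{1}(mulx1 t) -(prel x y); apply: le_trans (mulU _ _ _) _.
    apply: leU2; apply/res.
      rewrite mA (mC x t) -mA div mC; apply/res; exact: lexx.
    rewrite mA (mC y t) -mA div meetC mC; apply/res; exact: lexx.
  by rewrite leUx !antiI ?leIl ?leIr.
move=> H x y z h; apply: top_eq; rewrite -H; apply/imp1; exact: h.
Qed.
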